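(* For every $n\ge1$, $$\sum_{\deg\tau=n}\frac{B_\tau}{\tau!}=\frac{(-1)^{n+1}}{n},$$ where the sum runs over all non-associative monomials $\tau$ in one variable $x$ of degree $n$ (equivalently, rooted binary plane trees with $n$ leaves).
   Context: Bernoulli numbers $B_k$ are defined by $B_0=1$ and $\sum_{k=0}^{n-1}\frac{B_k}{k!(n-k)!}=0$ for $n\ge2$ (so $B_1=-1/2$). For a non-associative monomial $\tau$ in $x$: if $\tau=x$ set $B_\tau=1$, $\tau!=1$; otherwise $\tau$ can be written uniquely as $(\cdots((x\tau_1)\tau_2)\cdots)\tau_k$ with $k\ge1$ and monomials $\tau_1,\dots,\tau_k$, and one sets $B_\tau=B_k B_{\tau_1}\cdots B_{\tau_k}$ and $\tau!=k!\,\tau_1!\cdots\tau_k!$. The degree of $\tau$ is the number of occurrences of $x$. *)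

(* Defs.v *)
From HB Require Import structures.
From mathcomp Require Import all_boot all_order all_algebra.
Set Implicit Arguments. Unset Strict Implicit. Unset Printing Implicit Defensive.
Import Order.TTheory GRing.Theory Num.Theory.

(* Non-associative monomials in one variable x = rooted binary plane trees.
   Leaf is x, Node a b is the product (a b). *)
Inductive tree : Type := Leaf | Node of tree & tree.

Fixpoint tree_eqb (s t : tree) : bool :=
  match s, t with
  | Leaf, Leaf => true
  | Node a b, Node c d => tree_eqb a c && tree_eqb b d
  | _, _ => false
  end.

Lemma tree_eqP : Equality.axiom tree_eqb.
Proof.
elim=> [|a IHa b IHb] [|c d] /=; try by constructor.
by apply: (iffP andP) => [[/IHa -> /IHb ->]|[<- <-]]; split; [apply/IHa|apply/IHb].
Qed.

HB.instance Definition _ := hasDecEq.Build tree tree_eqP.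

Fixpoint deg (t : tree) : nat :=
  match t with Leaf => 1 | Node a b => deg a + deg b end.

(* Left-spine decomposition: tau = (...((x tau_1) tau_2)...) tau_k.
   spine tau = [:: tau_1; ...; tau_k] (empty for tau = x). *)
Fixpoint spine (t : tree) : seq tree :=
  match t with Leaf => [::] | Node a b => rcons (spine a) b end.

(* info t = (k, prod_i B_{tau_i}, prod_i tau_i!) where k = size (spine t),
   given the Bernoulli sequence B.  Computed structurally. *)
Fixpoint info (B : nat -> rat) (t : tree) : nat * rat * nat :=
  match t with
  | Leaf => (0%N, 1%R, 1%N)
  | Node a b =>
      let '(k, p, f) := info B a in
      let '(k', p', f') := info B b in
      (k.+1, (p * (B k' * p'))%R, (f * (k'`! * f'))%N)
  end.

(* B_tau = B_k * B_{tau_1} ... B_{tau_k};  for tau = x this is B_0 = 1. *)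
Definition Btau (B : nat -> rat) (t : tree) : rat :=
  let '(k, p, _) := info B t in (B k * p)%R.

(* tau! = k! * tau_1! ... tau_k!;  for tau = x this is 0! = 1. *)
Definition tfact (t : tree) : nat :=
  let '(k, _, f) := info (fun _ => 0%R) t in (k`! * f)%N.

Fixpoint trees (fuel : nat) : seq tree :=
  match fuel with
  | 0 => [::]
  | f.+1 => Leaf :: [seq Node l r | l <- trees f, r <- trees f]
  end.

(* All non-associative monomials of degree n (height <= degree). *)
Definition trees_of_deg (n : nat) : seq tree :=
  [seq t <- undup (trees n) | deg t == n].

Example trees_of_deg_sizes :
  map (fun n => size (trees_of_deg n)) (iota 1 5) = [:: 1; 1; 2; 5; 14]%N.
Proof. by vm_compute. Qed.

(* Main.v *)
Require Import Defs.
From HB Require Import structures.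
From mathcomp Require Import all_boot all_order all_algebra.
Import Order.TTheory GRing.Theory Num.Theory.

Fixpoint ht (t : tree) : nat :=
  match t with Leaf => 1 | Node a b => (maxn (ht a) (ht b)).+1 end.

Lemma mem_trees f t : (t \in trees f) = (ht t <= f).
Proof.
elim: f t => [|f IH] [|a b] //=.
rewrite in_cons /=; apply/allpairsP/idP.
  by case=> [[x y]] /= [xi yi [-> ->]]; rewrite ltnS geq_max -!IH xi yi.
by rewrite ltnS geq_max -!IH => /andP[ai bi]; exists (a, b).
Qed.

Lemma deg_gt0 t : 0 < deg t.
Proof. by elim: t => //= a IHa b IHb; rewrite addn_gt0 IHa. Qed.

Lemma ht_deg t : ht t <= deg t.
Proof.
elim: t => //= a IHa b IHb.
have h1 : deg b < deg a + deg b by rewrite -{1}[deg b]add0n ltn_add2r deg_gt0.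
have h2 : deg a < deg a + deg b by rewrite -{1}[deg a]addn0 ltn_add2l deg_gt0.
case: (leqP (ht a) (ht b)) => h.
  exact: leq_ltn_trans IHb h1.
exact: leq_ltn_trans IHa h2.
Qed.

Definition D N m := [seq t <- undup (trees N) | deg t == m].

Lemma mem_D N m t : m <= N -> (t \in D N m) = (deg t == m).
Proof.
move=> mN; rewrite mem_filter mem_undup mem_trees.
case: eqP => //= e; rewrite -e in mN; exact: leq_trans (ht_deg t) mN.
Qed.

Lemma uniq_D N m : uniq (D N m).
Proof. by rewrite filter_uniq ?undup_uniq. Qed.

Lemma perm_TD N m : m <= N -> perm_eq (trees_of_deg m) (D N m).
Proof.
move=> mN; apply: uniq_perm; rewrite ?uniq_D // => t.
by rewrite /trees_of_deg -/(D m m) !mem_D.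
Qed.

Lemma mem_TD m t : (t \in trees_of_deg m) = (deg t == m).
Proof. by rewrite /trees_of_deg -/(D m m) mem_D. Qed.

Lemma TD1 : trees_of_deg 1 = [:: Leaf].
Proof. by vm_compute. Qed.

Lemma TD0 : trees_of_deg 0 = [::].
Proof. by vm_compute. Qed.

Section Split.
Variable R : nmodType.
Local Open Scope ring_scope.

Lemma TD_split n (F : tree -> R) : (1 < n)%N ->
  \sum_(t <- trees_of_deg n) F t =
  \sum_(j < n) \sum_(a <- trees_of_deg j) \sum_(b <- trees_of_deg (n - j)) F (Node a b).
Proof.
move=> n1.
set M := undup (trees n).
set s2 := [seq Node p.1 p.2 | p <- [seq p <- [seq (x, y) | x <- M, y <- M] | (deg p.1 + deg p.2 == n)%N]].
have P : perm_eq (trees_of_deg n) s2.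
  apply: uniq_perm.
  - by rewrite /trees_of_deg filter_uniq ?undup_uniq.
  - rewrite map_inj_uniq; last by case=> [x y] [x' y'] /= [-> ->].
    rewrite filter_uniq // allpairs_uniq ?undup_uniq //.
    by case=> [x y] [x' y'] _ _.
  move=> t; rewrite mem_TD; apply/idP/idP.
    case: t => [|a b] /=; first by move/eqP=> h; rewrite -h in n1.
    move=> /eqP hd.
    have ha : (ht a <= n)%N by rewrite -hd (leq_trans (ht_deg a)) // leq_addr.
    have hb : (ht b <= n)%N by rewrite -hd (leq_trans (ht_deg b)) // leq_addl.
    apply/mapP; exists (a, b) => //.
    rewrite mem_filter /= hd eqxx /=.
    apply: (@allpairs_f _ _ _ pair); rewrite /M ?mem_undup ?mem_trees //.
  by case/mapP=> [[x y]]; rewrite mem_filter /= => /andP[/eqP h _] -> /=; rewrite h.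
rewrite (perm_big _ P) big_map big_filter big_mkcond big_allpairs /=.
have step : forall x, \sum_(y <- M) (if (deg x + deg y == n)%N then F (Node x y) else 0)
   = \sum_(j < n) (if (deg x == j)%N then \sum_(b <- trees_of_deg (n - j)) F (Node x b) else 0).
  move=> x; case: (ltnP (deg x) n) => hx.
    rewrite [RHS](bigD1 (Ordinal hx)) // [X in _ = _ + X]big1 ?addr0; last first.
      move=> j hj; case: eqP => // e; move/eqP: hj; case; exact: val_inj.
    rewrite eqxx (perm_big _ (@perm_TD n _ (leq_subr _ _))) /D big_filter [RHS]big_mkcond.
    by apply: eq_bigr => y _; rewrite -{1}(subnKC (ltnW hx)) eqn_add2l.
  rewrite big1 ?big1 // => [j _|y _].
    by case: eqP => // e; move: (ltn_ord j); rewrite -e ltnNge hx.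
  case: eqP => // e; move: (deg_gt0 y); rewrite -(ltn_add2l (deg x)) addn0 e.
  by rewrite ltnNge hx.
rewrite (eq_bigr _ (fun x _ => step x)) exchange_big /=.
apply: eq_bigr => j _.
rewrite -big_mkcond -big_filter -/(D n j) (perm_big _ (@perm_TD n _ (ltnW (ltn_ord j)))).
by [].
Qed.
End Split.
Fixpoint kof (t : tree) : nat :=
  match t with Leaf => 0%N | Node a _ => (kof a).+1 end.
Fixpoint fof (t : tree) : nat :=
  match t with Leaf => 1%N | Node a b => (fof a * ((kof b)`! * fof b))%N end.
Fixpoint pof (B : nat -> rat) (t : tree) : rat :=
  match t with Leaf => 1%R | Node a b => (pof B a * (B (kof b) * pof B b))%R end.

Lemma info_eq B t : info B t = (kof t, pof B t, fof t).
Proof. by elim: t => //= a -> b ->. Qed.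

Lemma kof_lt t : (kof t < deg t)%N.
Proof.
elim: t => //= a IHa b _; rewrite -addn1 (leq_trans (leq_add IHa (deg_gt0 b))) //.
Qed.

Local Open Scope ring_scope.

Section W.
Variable B : nat -> rat.

Definition w t := Btau B t / (tfact t)%:R.
Definition P t := pof B t / (fof t)%:R.

Lemma wE t : w t = B (kof t) / (kof t)`!%:R * P t.
Proof.
rewrite /w /Btau /tfact /P !info_eq natrM invfM -!mulrA; congr (_ * _); exact: mulrCA.
Qed.

Lemma PN a b : P (Node a b) = P a * w b.
Proof.
rewrite wE /P [pof _ _]/= [fof _]/= !natrM !invfM.
set x := pof B a; set y := B _; set z := pof B b; set u := (fof a)%:R^-1.
set v := _^-1; set r := _^-1.
by rewrite mulrACA; congr (_ * _); rewrite mulrACA.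
Qed.

Definition aa n := \sum_(t <- trees_of_deg n) w t.
Definition S n k := \sum_(t <- trees_of_deg n) (if kof t == k then P t else 0).

Lemma sum_if_ord (R : nmodType) n i (hi : (i < n)%N) (G : nat -> R) :
  \sum_(k < n) (if i == k then G k else 0) = G i.
Proof.
rewrite (bigD1 (Ordinal hi)) // [X in _ + X = _]big1 ?addr0 ?eqxx //.
move=> j hj; case: eqP => // e; move/eqP: hj; case; exact: val_inj.
Qed.

Lemma aS n : aa n = \sum_(k < n) B k / k`!%:R * S n k.
Proof.
rewrite /aa /S.
under [RHS]eq_bigr do rewrite big_distrr.
rewrite exchange_big /= big_seq [RHS]big_seq; apply: eq_bigr => t.
rewrite mem_TD => /eqP dt.
rewrite -dt wE -(@sum_if_ord _ _ _ (kof_lt t) (fun k => B k / k`!%:R * P t)).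
by apply: eq_bigr => k _; case: eqP => _; rewrite ?mulr0.
Qed.

Lemma S0 k : S 0 k = 0.
Proof. by rewrite /S TD0 big_nil. Qed.

Lemma S1 k : S 1 k = (k == 0%N)%:R.
Proof.
rewrite /S TD1 big_cons big_nil addr0 /= eq_sym.
by case: eqP => //; rewrite /P /= invr1 mulr1.
Qed.

Lemma Sn0 n : (1 < n)%N -> S n 0 = 0.
Proof.
by move=> n1; rewrite /S TD_split // big1 // => j _; rewrite big1 // => a _; rewrite big1.
Qed.

Lemma Srec n k : (1 < n)%N -> S n k.+1 = \sum_(j < n) S j k * aa (n - j).
Proof.
move=> n1; rewrite /S TD_split //; apply: eq_bigr => j _.
rewrite /aa big_distrl; apply: eq_bigr => a _ /=.
rewrite big_distrr; apply: eq_bigr => b _ /=.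
by rewrite eqSS; case: eqP => _; rewrite ?PN ?mul0r.
Qed.
End W.

Section Poly.
Variable N : nat.

Definition l0 : {poly rat} := \poly_(j < N) ((-1) ^+ j / (j.+1)%:R).
Definition lg : {poly rat} := 'X * l0.

Lemma lowpow k i p : (i < k)%N -> (lg ^+ k * p)`_i = 0.
Proof. by move=> ik; rewrite /lg exprMn -mulrA coefXnM ik. Qed.

Lemma lowpow1 k i : (i < k)%N -> (lg ^+ k)`_i = 0.
Proof. by move=> ik; rewrite -[lg ^+ k]mulr1 lowpow. Qed.

Lemma coef_lg i : lg`_i = if i == 0%N then 0 else
   if (i.-1 < N)%N then (-1) ^+ i.-1 / i%:R else 0.
Proof. by rewrite /lg coefXM coef_poly; case: i. Qed.

Definition eqm M (p q : {poly rat}) := forall i, (i < M)%N -> p`_i = q`_i.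

Lemma eqm_mul M p p' q q' : eqm M p p' -> eqm M q q' -> eqm M (p * q) (p' * q').
Proof.
move=> hp hq i iM; rewrite !coefM; apply: eq_bigr => j _.
have ji : (j <= i)%N by rewrite -ltnS.
by rewrite hp ?hq //; [apply: leq_ltn_trans (leq_subr j i) iM | apply: leq_ltn_trans ji iM].
Qed.

Lemma natr_neq0 k : (k.+1)%:R != 0 :> rat.
Proof. by rewrite pnatr_eq0. Qed.

Lemma fact_inv j : ((j.+1)`!%:R)^-1 * (j.+1)%:R = (j`!%:R)^-1 :> rat.
Proof. by rewrite factS natrM invfM mulrAC mulVf ?mul1r // natr_neq0. Qed.

Definition E := \sum_(j < N.+1) (j`!%:R)^-1 *: lg ^+ j.
Definition E2 := \sum_(j < N) (j`!%:R)^-1 *: lg ^+ j.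

Lemma dlg i : (i < N)%N -> lg^`()`_i = (-1) ^+ i.
Proof.
move=> iN; rewrite coef_deriv coef_lg /= iN -[X in X = _]mulr_natr divfK //.
exact: natr_neq0.
Qed.

Lemma D1 : eqm N ((1 + 'X) * lg^`()) 1.
Proof.
move=> i iN; rewrite mulrDl mul1r coefD coefXM coef1 dlg //.
case: i iN => [|m] iN /=; first by rewrite addr0.
by rewrite dlg ?(ltnW iN) // exprS mulN1r addNr.
Qed.

Lemma dE : E^`() = lg^`() * E2.
Proof.
rewrite /E (big_morph _ (@derivD _) (@deriv0 _)) big_ord_recl /= expr0.
rewrite -polyC1 derivZ derivC scaler0 add0r /E2 mulr_sumr.
apply: eq_bigr => j _; rewrite ?lift0 derivZ deriv_exp /= -scaler_nat scalerA.
by rewrite fact_inv -scalerAr.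
Qed.

Lemma E_E2 : eqm N E2 E.
Proof.
move=> i iN; rewrite /E big_ord_recr /= coefD coefZ lowpow1 // mulr0 addr0.
by [].
Qed.

Lemma Ekey : eqm N ((1 + 'X) * E^`()) E.
Proof.
move=> i iN; rewrite dE mulrA.
by rewrite (@eqm_mul _ _ _ _ _ D1 E_E2) // mul1r.
Qed.

Lemma E0 : E`_0 = 1.
Proof.
rewrite /E coef_sum big_ord_recl /= expr0 coefZ coef1 /= mulr1 big1 ?addr0.
  by rewrite invr1.
by move=> j _; rewrite coefZ ?lift0 lowpow1 // mulr0.
Qed.

Lemma mulrn_eq0' (x : rat) k : x *+ k.+1 = 0 -> x = 0.
Proof. by move/eqP; rewrite mulrn_eq0 => /eqP. Qed.

Lemma Ecoef i : (i <= N)%N -> E`_i = (i <= 1)%N%:R.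
Proof.
elim: i => [|i IH] iN; first by rewrite E0.
have iN' : (i < N)%N by [].
have := @Ekey i iN'; rewrite mulrDl mul1r coefD coefXM coef_deriv (IH (ltnW iN)).
case: i IH iN iN' => [|m] IH iN iN'.
  by rewrite addr0 mulr1n.
have hm : (m <= N)%N by apply: leq_trans (ltnW iN'); rewrite leqnSn.
rewrite /= coef_deriv (IH (ltnW iN')).
case: m IH iN iN' hm => [|m] IH iN iN' hm.
  by rewrite mulr1n => /eqP; rewrite -subr_eq0 addrK => /eqP /mulrn_eq0'.
by rewrite /= mul0rn addr0 => /mulrn_eq0'.
Qed.

Lemma comp_poly_def n (c : nat -> rat) q :
  (\poly_(k < n) c k) \Po q = \sum_(k < n) c k *: q ^+ k.
Proof.
rewrite poly_def (big_morph _ (fun p r => comp_polyD p r q) (comp_poly0 q)).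
by apply: eq_bigr => k _; rewrite comp_polyZ comp_Xn_poly.
Qed.

Lemma lgQ : eqm N.+1 (lg * (\poly_(j < N.+1) ((j.+1)`!%:R)^-1 \Po lg)) 'X.
Proof.
move=> i iN; rewrite comp_poly_def mulr_sumr coef_sum coefX.
have -> : (i == 1%N)%:R = E`_i - (lg ^+ 0)`_i :> rat.
  rewrite Ecoef // expr0 coef1.
  by case: i {iN} => [|[|i]] /=; rewrite ?subrr ?subr0.
rewrite /E coef_sum [X in _ = X - _]big_ord_recl /= ?fact0 ?invr1 ?scale1r addrAC subrr add0r.
rewrite [LHS]big_ord_recr /= -scalerAr -exprS coefZ lowpow1 // mulr0 addr0.
by apply: eq_bigr => j _; rewrite /bump /= add1n -scalerAr -exprS !coefZ.
Qed.

Variable B : nat -> rat.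
Hypothesis hB0 : B 0%N = 1.
Hypothesis hBrec : forall n : nat, (2 <= n)%N ->
       \sum_(k < n) B k / ((k`!)%:R * ((n - k)`!)%:R) = 0.

Definition Pb := \poly_(k < N.+1) (B k / k`!%:R).
Definition Qp := \poly_(j < N.+1) ((j.+1)`!%:R)^-1 : {poly rat}.

Lemma PbQ : take_poly N.+1 (Pb * Qp) = 1.
Proof.
apply/polyP => s; rewrite coef_take_poly coef1.
case: ltnP => hs; last by case: s hs.
rewrite coefM.
have -> : \sum_(j < s.+1) Pb`_j * Qp`_(s - j) =
          \sum_(j < s.+1) B j / (j`!%:R * ((s.+1 - j)`!)%:R).
  apply: eq_bigr => j _.
  have js : (j <= s)%N by rewrite -ltnS.
  rewrite !coef_poly (leq_ltn_trans js hs) (leq_ltn_trans (leq_subr j s) hs).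
  by rewrite subSn // invfM mulrA.
case: s hs => [|m] hs.
  by rewrite big_ord1 /= hB0 !mul1r invr1.
by rewrite hBrec.
Qed.

Lemma Bern : eqm N.+1 ((Pb \Po lg) * (Qp \Po lg)) 1.
Proof.
move=> i iN; rewrite -comp_polyM -(poly_take_drop N.+1 (Pb * Qp)) PbQ.
rewrite comp_polyD comp_polyM comp_Xn_poly -polyC1 comp_polyC coefD mulrC.
by rewrite lowpow // addr0.
Qed.

Lemma lgB : eqm N.+1 lg ('X * (Pb \Po lg)).
Proof.
move=> i iN.
have h1 := @eqm_mul _ _ _ _ _ (fun j _ => erefl (lg`_j)) Bern i iN.
rewrite mulr1 in h1; rewrite -h1 mulrCA.
have h2 := @eqm_mul _ _ _ _ _ (fun j _ => erefl ((Pb \Po lg)`_j)) lgQ i iN.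
by rewrite h2 mulrC.
Qed.

End Poly.

Definition L (n : nat) : rat := (-1) ^+ n.+1 / n%:R.

Lemma coef_lgL N j : (0 < j)%N -> (j <= N)%N -> (lg N)`_j = L j.
Proof.
case: j => // m _ mN; rewrite coef_lg /= mN /L !exprS.
by rewrite mulN1r mulN1r opprK.
Qed.

Lemma aa_L B (hB0 : B 0%N = 1)
    (hBrec : forall n : nat, (2 <= n)%N ->
       \sum_(k < n) B k / ((k`!)%:R * ((n - k)`!)%:R) = 0)
    n : (0 < n)%N -> aa B n = L n.
Proof.
elim/ltn_ind: n => n IH n0.
have lgj : forall j, (0 < j)%N -> (j < n)%N -> aa B j = (lg n)`_j.
  by move=> j j0 jn; rewrite IH // coef_lgL // ltnW.
have key : forall k m, (m <= n)%N -> S B m k = ('X * lg n ^+ k)`_m.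
  elim=> [|k IHk] m mn.
    rewrite expr0 mulr1 coefX.
    case: m mn => [|[|m]] mn; first by rewrite S0.
      by rewrite S1.
    by rewrite Sn0.
  case: m mn => [|[|m]] mn.
  - by rewrite S0 coefXM.
  - by rewrite S1 coefXM /= lowpow1.
  rewrite Srec // exprSr mulrA coefM [RHS]big_ord_recr /= ?subnn coef_lg /= mulr0 addr0.
  apply: eq_bigr => j _.
  have jm : (j <= m.+2)%N by apply: ltnW.
  rewrite IHk; last by apply: leq_trans mn; apply: ltnW.
  case: (posnP j) => [->|j0]; first by rewrite coefXM /= !mul0r.
  rewrite lgj //; first by rewrite subn_gt0.
  by apply: leq_trans mn; rewrite ltn_subrL j0.
rewrite aS.
have := @lgB n B hB0 hBrec n (ltnSn n).
rewrite coef_lgL // => ->.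
rewrite /Pb comp_poly_def mulr_sumr coef_sum big_ord_recr /=.
rewrite -scalerAr coefZ coefXM -(prednK n0) /= lowpow1 // mulr0 addr0 (prednK n0).
by apply: eq_bigr => k _; rewrite key // -scalerAr coefZ.
Qed.

Theorem mainTheorem19 (B : nat -> rat)
    (hB0 : B 0%N = 1)
    (hBrec : forall n : nat, (2 <= n)%N ->
       \sum_(k < n) B k / ((k`!)%:R * ((n - k)`!)%:R) = 0)
    (n : nat) (hn : (1 <= n)%N) :
  \sum_(t <- trees_of_deg n) Btau B t / (tfact t)%:R = (-1) ^+ n.+1 / n%:R.
Proof. by have := @aa_L B hB0 hBrec n hn; rewrite /aa /w /L. Qed.
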